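(* Let $\mathcal E$ be an exchangeability system for a noncommutative probability space $(\mathcal A,\phi)$, let $X_1,\dots,X_n\in\mathcal A$ and $I\subseteq[n]$ with $X_j=1$ (the unit) for all $j\in I$. Let $\pi\in\Pi_n$ be such that $\{j\}$ is a block of $\pi$ for every $j\in I$, and let $\tilde\pi$ be the partition of $[n]\setminus I$ obtained by removing these singletons from $\pi$. Then $K_\pi(X_1,\dots,X_n)=K_{\tilde\pi}(X_i:i\in[n]\setminus I)$, where on the right the variables are taken in increasing order of $i$ and $\tilde\pi$ is transported accordingly to a partition of $[n-|I|]$.
   Context: A noncommutative probability space is a pair $(\mathcal A,\phi)$ of a complex unital algebra $\mathcal A$ and a unital linear functional $\phi$. An exchangeability system $\mathcal E$ for $(\mathcal A,\phi)$ consists of a noncommutative probability space $(\mathcal U,\tilde\phi)$ and a family $(\iota_k)_{k\in\mathbb N}$ of embeddings (injective unital algebra homomorphisms) $\iota_k:\mathcal A\to\mathcal A_k\subseteq\mathcal U$ with $\tilde\phi\circ\iota_k=\phi$; write $X^{(k)}=\iota_k(X)$. It is required that for all $X_1,\dots,X_n\in\mathcal A$, indices $i_1,\dots,i_n\in\mathbb N$ and bijections $\sigma$ of $\mathbb N$, $\tilde\phi(X_1^{(i_1)}\cdots X_n^{(i_n)})=\tilde\phi(X_1^{(\sigma(i_1))}\cdots X_n^{(\sigma(i_n))})$; this value depends only on the kernel of $j\mapsto i_j$ and for a partition $\sigma$ is denoted $\phi_\sigma(X_1,\dots,X_n)$. $\Pi_n$ is the lattice of set partitions of $[n]$ under refinement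 with Möbius function $\mu$; $K_\pi(X_1,\dots,X_n)=\sum_{\sigma\le\pi}\phi_\sigma(X_1,\dots,X_n)\mu(\sigma,\pi)$. *)

(* Defs.v *)
From HB Require Import structures.
From mathcomp Require Import all_boot all_order all_algebra.
From mathcomp Require Import reals complex.
Set Implicit Arguments. Unset Strict Implicit. Unset Printing Implicit Defensive.
Import Order.TTheory GRing.Theory Num.Theory.
Local Open Scope ring_scope.

Section Defs.
Variable R : realType.
Local Notation C := (R[i])%C.

Definition nc_functional (A : algType C) (phi : A -> C) : Prop :=
  (forall (a : C) (x y : A), phi (a *: x + y) = a * phi x + phi y) /\ phi 1 = 1.

Definition unital_alg_hom (A B : algType C) (f : A -> B) : Prop :=
  [/\ forall (a : C) (x y : A), f (a *: x + y) = a *: f x + f y,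
      forall x y : A, f (x * y) = f x * f y & f 1 = 1].

Record exch_system (A : algType C) (phi : A -> C) := ExchSystem {
  ex_U : algType C;
  ex_phi : ex_U -> C;
  ex_iota : nat -> A -> ex_U;
  ex_phi_func : nc_functional ex_phi;
  ex_iota_hom : forall k, unital_alg_hom (ex_iota k);
  ex_iota_inj : forall k, injective (ex_iota k);
  ex_iota_phi : forall k (x : A), ex_phi (ex_iota k x) = phi x;
  ex_exch : forall (n : nat) (X : 'I_n -> A) (i : 'I_n -> nat) (s : nat -> nat),
      bijective s ->
      ex_phi (\prod_(j < n) ex_iota (i j) (X j)) =
      ex_phi (\prod_(j < n) ex_iota (s (i j)) (X j))
}.

Definition Pi (n : nat) := {P : {set {set 'I_n}} | partition P [set: 'I_n]}.

Definition refines n (s p : {set {set 'I_n}}) : bool :=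
  [forall B in s, exists B' in p, B \subset B'].

(* Moebius function of the lattice Pi_n: inverse of the zeta function in the
   incidence algebra, realised as the inverse of the zeta matrix. *)
Definition zeta_mx n : 'M[C]_#|{: Pi n}| :=
  \matrix_(i, j) (refines (val (enum_val i)) (val (enum_val j)))%:R.

Definition moebius n (s p : Pi n) : C :=
  invmx (zeta_mx n) (enum_rank s) (enum_rank p).

(* Moebius function on raw sets of blocks (0 if not both partitions). *)
Definition mu n (s p : {set {set 'I_n}}) : C :=
  match insub s, insub p with
  | Some s', Some p' => moebius (n := n) s' p'
  | _, _ => 0
  end.

Variables (A : algType C) (phi : A -> C) (E : exch_system phi).

(* phi_sigma(X_1,...,X_n): phi~(X_1^(i_1) ... X_n^(i_n)) where the kernel of
   j |-> i_j is sigma; we take i_j := the position of the block of j. *)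
Definition phi_part n (s : {set {set 'I_n}}) (X : 'I_n -> A) : C :=
  @ex_phi _ _ E (\prod_(j < n) @ex_iota _ _ E (index (pblock s j) (enum s)) (X j)).

Definition K n (p : {set {set 'I_n}}) (X : 'I_n -> A) : C :=
  \sum_(s : Pi n | refines (val s) p) phi_part (val s) X * mu (val s) p.

End Defs.

(* increasing enumeration of the complement of I in [n] *)
Definition compl_enum n (I : {set 'I_n}) : 'I_#|~: I| -> 'I_n :=
  fun k => enum_val k.

Definition remove_part n (I : {set 'I_n}) (p : {set {set 'I_n}})
  : {set {set 'I_#|~: I|}} :=
  [set (@compl_enum n I) @^-1: B | B : {set 'I_n} in p & ~~ (B \subset I)].

(* Main.v *)
Require Import Defs.
From HB Require Import structures.
From mathcomp Require Import all_boot all_order all_algebra all_fingroup.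
From mathcomp Require Import reals complex.
Set Implicit Arguments. Unset Strict Implicit. Unset Printing Implicit Defensive.
Import GRing.Theory.

Lemma partitionTP (T : finType) (P : {set {set T}}) :
  partition P [set: T] <->
  [/\ set0 \notin P, (forall x, exists2 B, B \in P & x \in B) &
      (forall B1 B2 x, B1 \in P -> B2 \in P -> x \in B1 -> x \in B2 -> B1 = B2)].
Proof.
split.
  case/and3P => /eqP hc ht h0; split => //.
    move=> x; have : x \in cover P by rewrite hc inE.
    by case/bigcupP => B hB hx; exists B.
  move=> B1 B2 x h1 h2 x1 x2.
  by rewrite -(def_pblock ht h1 x1) (def_pblock ht h2 x2).
case=> h0 hc hu; apply/and3P; split => //.
  apply/eqP/setP => x; rewrite inE; apply/bigcupP.
  by case: (hc x) => B hB hx; exists B.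
apply/trivIsetP => B1 B2 h1 h2 hne; rewrite -setI_eq0; apply/eqP/setP => x.
rewrite !inE; apply/negbTE/andP => [[x1 x2]].
by move/eqP: hne; apply; apply: (hu _ _ x).
Qed.

Lemma poset_ind (T : finType) (lt : rel T) :
  transitive lt -> irreflexive lt ->
  forall P : T -> Prop, (forall x, (forall y, lt y x -> P y) -> P x) -> forall x, P x.
Proof.
move=> htr hirr P IH x.
have [m] := ubnP #|[set y | lt y x]|.
elim: m x => [|m IHm] x // hx; apply: IH => y hy.
apply: IHm; rewrite ltnS in hx; apply: leq_trans hx; apply: proper_card.
apply/properP; split.
  by apply/subsetP => z; rewrite !inE => hz; apply: htr hy.
by exists y; rewrite !inE ?hy ?hirr.
Qed.

Lemma big_enum_val_nc (R : Type) (idx : R) (op : Monoid.law idx) (T : finType)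
  (A : {pred T}) (F : T -> R) :
  \big[op/idx]_(x in A) F x = \big[op/idx]_(k < #|A|) F (enum_val k).
Proof.
case: (pickP A) => [x0 hx0 | h0]; last first.
  rewrite big_pred0 //; have e : #|A| = 0 by apply: eq_card0.
  by rewrite big1 // => k; move: (ltn_ord k); rewrite {2}e.
rewrite -big_filter deprecated_filter_index_enum (big_nth x0).
rewrite (eq_bigr (fun k : 'I_#|A| => F (nth x0 (enum A) k))); last first.
  by move=> k _; rewrite /enum_val; congr F; apply: set_nth_default; rewrite -cardE.
by rewrite -(big_mkord xpredT (fun k => F (nth x0 (enum A) k))) cardE.
Qed.

Lemma kernel_bij (m : nat) (a b : 'I_m -> nat) :
  (forall k k', (a k == a k') = (b k == b k')) ->
  exists s : nat -> nat, bijective s /\ forall k, s (a k) = b k.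
Proof.
move=> hab.
pose N := (\max_(k < m) maxn (a k) (b k)).+1.
have hN : forall k, a k < N /\ b k < N.
  move=> k; rewrite /N !ltnS.
  have := @leq_bigmax _ (fun k => maxn (a k) (b k)) k; rewrite geq_max => /andP [h1 h2].
  by split.
pose D : {set 'I_N} := [set x : 'I_N | [exists k, a k == x :> nat]].
pose f (x : 'I_N) : 'I_N := if [pick k | a k == x :> nat] is Some k then inord (b k) else x.
have finj : {in D &, injective f}.
  move=> x y; rewrite !inE /f => /existsP [k hk] /existsP [k' hk'].
  case: pickP => [k1 hk1|]; last by move/(_ k); rewrite hk.
  case: pickP => [k2 hk2|]; last by move/(_ k'); rewrite hk'.
  move/(congr1 (@nat_of_ord N)); rewrite !inordK ?(proj2 (hN k1)) ?(proj2 (hN k2)) //.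
  move/eqP; rewrite -hab => /eqP e; apply: ord_inj.
  by rewrite -(eqP hk1) -(eqP hk2).
pose C1 := ~: D; pose C2 := ~: (f @: D).
have hcard : #|C1| = #|C2|.
  by apply/eqP; rewrite -(eqn_add2l #|D|) cardsC -{1}(card_in_imset finj) cardsC.
pose g (x : 'I_N) : 'I_N :=
  if x \in D then f x else nth x (enum C2) (index x (enum C1)).
have hg2 : forall x, x \notin D -> g x \in C2.
  move=> x hx; rewrite /g (negbTE hx).
  suff hi : index x (enum C1) < size (enum C2) by rewrite -mem_enum mem_nth.
  by rewrite -cardE -hcard cardE index_mem mem_enum inE.
have ginj : injective g.
  move=> x y; case hx: (x \in D); case hy: (y \in D).
  - by rewrite /g hx hy; apply: finj.
  - move=> e; have := hg2 y (negbT hy); rewrite -e /g hx inE.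
    by rewrite (imset_f f hx).
  - move=> e; have := hg2 x (negbT hx); rewrite e /g hy inE.
    by rewrite (imset_f f hy).
  - rewrite /g hx hy => e.
    have hxi : index x (enum C1) < size (enum C2).
      by rewrite -cardE -hcard cardE index_mem mem_enum inE hx.
    have hyi : index y (enum C1) < size (enum C2).
      by rewrite -cardE -hcard cardE index_mem mem_enum inE hy.
    move: e; rewrite (set_nth_default x y hyi).
    move/eqP; rewrite nth_uniq ?enum_uniq // => /eqP.
    move=> e; apply: (@index_inj _ x (enum C1) x y _ _ e);
      by rewrite mem_enum inE ?hx ?hy.
pose sg := perm ginj.
exists (fun n => if n < N then val (sg (inord n)) else n); split.
  exists (fun n => if n < N then val (sg^-1%g (inord n)) else n) => n.
    rewrite /=; case hn: (n < N); last by rewrite hn.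
    by rewrite ltn_ord inord_val permK inordK.
  rewrite /=; case hn: (n < N); last by rewrite hn.
  by rewrite ltn_ord inord_val permKV inordK.
move=> k; have [ha hb] := hN k; rewrite ha permE /g.
have hD : inord (a k) \in D by rewrite inE; apply/existsP; exists k; rewrite inordK.
rewrite hD /f; case: pickP => [k1 hk1|]; last by move/(_ k); rewrite inordK ?eqxx.
rewrite /= inordK; last by case: (hN k1).
by apply/eqP; rewrite -hab inordK in hk1 *.
Qed.


Section Transport.
Variables (n : nat) (I : {set 'I_n}).
Local Notation n' := #|~: I|.
Local Notation ce := (@compl_enum n I).

Definition addI (t : {set {set 'I_n'}}) : {set {set 'I_n}} :=
  [set ce @: B | B : {set 'I_n'} in t] :|: [set [set j] | j in I].

Definition hasI (p : {set {set 'I_n}}) := forall j, j \in I -> [set j] \in p.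

Lemma ce_inj : injective ce.
Proof. exact: enum_val_inj. Qed.

Lemma ce_notI k : ce k \notin I.
Proof. by have := enum_valP k; rewrite /compl_enum inE. Qed.

Lemma ce_surj x : x \notin I -> exists k, ce k = x.
Proof.
move=> hx; have hx' : x \in ~: I by rewrite inE.
by exists (enum_rank_in hx' x); rewrite /compl_enum enum_rankK_in.
Qed.

Lemma preim_im (B : {set 'I_n'}) : ce @^-1: (ce @: B) = B.
Proof. by apply/setP => k; rewrite inE mem_imset //; apply: ce_inj. Qed.

Lemma im_preim (B : {set 'I_n}) : (forall x, x \in B -> x \notin I) ->
  ce @: (ce @^-1: B) = B.
Proof.
move=> hB; apply/setP => x; apply/imsetP/idP.
  by case=> k; rewrite inE => hk ->.
move=> hx; have [k hk] := ce_surj (hB x hx).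
by exists k; rewrite // inE hk.
Qed.

Lemma mem_rp (s : {set {set 'I_n}}) C :
  (C \in remove_part I s) = [exists B in s, ~~ (B \subset I) && (C == ce @^-1: B)].
Proof.
apply/imsetP/exists_inP.
  by case=> B; rewrite inE => /andP [h1 h2] ->; exists B => //; rewrite h2 eqxx.
by case=> B h1 /andP [h2 /eqP ->]; exists B => //; rewrite inE h1 h2.
Qed.

Lemma mem_addI (t : {set {set 'I_n'}}) C :
  (C \in addI t) = [exists B in t, C == ce @: B] || [exists j in I, C == [set j]].
Proof.
rewrite inE; congr orb.
  apply/imsetP/exists_inP; first by case=> B h ->; exists B.
  by case=> B h /eqP ->; exists B.
apply/imsetP/exists_inP; first by case=> j h ->; exists j.
by case=> j h /eqP ->; exists j.
Qed.

Lemma r_part s : partition s setT -> partition (remove_part I s) setT.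
Proof.
case/partitionTP => s0 sc su; apply/partitionTP; split.
- apply/negP; rewrite mem_rp => /exists_inP [B hB /andP [hBI /eqP e]].
  case/subsetPn: hBI => x hx hxI; have [k hk] := ce_surj hxI.
  have : k \in ce @^-1: B by rewrite inE hk.
  by rewrite -e inE.
- move=> k; have [B hB hk] := sc (ce k); exists (ce @^-1: B); last by rewrite inE.
  rewrite mem_rp; apply/exists_inP; exists B => //; rewrite eqxx andbT.
  by apply/subsetPn; exists (ce k) => //; apply: ce_notI.
- move=> C1 C2 k; rewrite !mem_rp => /exists_inP [B1 h1 /andP [_ /eqP ->]].
  move=> /exists_inP [B2 h2 /andP [_ /eqP ->]]; rewrite !inE => k1 k2.
  by rewrite (su _ _ _ h1 h2 k1 k2).
Qed.

Lemma T_part t : partition t setT -> partition (addI t) setT.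
Proof.
case/partitionTP => t0 tc tu; apply/partitionTP; split.
- rewrite mem_addI negb_or; apply/andP; split.
    apply/exists_inP => [[B hB /eqP e]].
    have [k hk] : exists k, k \in B by apply/set0Pn; apply: contraNneq t0 => <-.
    by have := imset_f ce hk; rewrite -e inE.
  by apply/exists_inP => [[j hj /eqP e]]; have := set11 j; rewrite -e inE.
- move=> x; case hx: (x \in I).
    by exists [set x]; rewrite ?set11 // mem_addI; apply/orP; right; apply/exists_inP; exists x.
  have [k hk] := ce_surj (negbT hx); have [B hB kB] := tc k.
  exists (ce @: B); last by rewrite -hk imset_f.
  by rewrite mem_addI; apply/orP; left; apply/exists_inP; exists B.
- move=> C1 C2 x; rewrite !mem_addI.
  have key : forall B j, B \in t -> j \in I -> x \in ce @: B -> x \in [set j] -> False.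
    move=> B j _ hj /imsetP [k _ ->]; rewrite inE => /eqP e.
    by have := ce_notI k; rewrite e hj.
  case/orP => [/exists_inP [B1 h1 /eqP ->] | /exists_inP [j1 h1 /eqP ->]];
  case/orP => [/exists_inP [B2 h2 /eqP ->] | /exists_inP [j2 h2 /eqP ->]].
  + move=> /imsetP [k1 k1B ->] /imsetP [k2 k2B /ce_inj e].
    by rewrite (tu _ _ k1 h1 h2 k1B) // e.
  + by move=> a b; case: (key _ _ h1 h2 a b).
  + by move=> a b; case: (key _ _ h2 h1 b a).
  + by rewrite !inE => /eqP -> /eqP ->.
Qed.

Lemma T_hasI t : hasI (addI t).
Proof. by move=> j hj; rewrite mem_addI; apply/orP; right; apply/exists_inP; exists j. Qed.

Lemma block_avoid s B : partition s setT -> hasI s -> B \in s -> ~~ (B \subset I) ->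
  forall x, x \in B -> x \notin I.
Proof.
case/partitionTP => s0 sc su hs hB hBI x hx; apply/negP => hxI.
have e := su _ _ x hB (hs x hxI) hx (set11 x).
by move: hBI; rewrite e sub1set hxI.
Qed.

Lemma block_sub s B : partition s setT -> hasI s -> B \in s -> B \subset I ->
  exists2 j, j \in I & B = [set j].
Proof.
case/partitionTP => s0 sc su hs hB hBI.
have [x hx] : exists x, x \in B by apply/set0Pn; apply: contraNneq s0 => <-.
have hxI : x \in I := subsetP hBI x hx.
by exists x => //; apply: (su _ _ x hB (hs x hxI) hx (set11 x)).
Qed.

Lemma Tr s : partition s setT -> hasI s -> addI (remove_part I s) = s.
Proof.
move=> hp hs; apply/setP => C; rewrite mem_addI; apply/idP/idP.
  case/orP => [/exists_inP [C' hC' /eqP ->] | /exists_inP [j hj /eqP ->]]; last exact: hs.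
  move: hC'; rewrite mem_rp => /exists_inP [B hB /andP [hBI /eqP ->]].
  by rewrite im_preim //; apply: block_avoid hp hs hB hBI.
move=> hC; case hCI: (C \subset I).
  have [j hj ->] := block_sub hp hs hC hCI.
  by apply/orP; right; apply/exists_inP; exists j.
apply/orP; left; apply/exists_inP; exists (ce @^-1: C).
  by rewrite mem_rp; apply/exists_inP; exists C => //; rewrite hCI eqxx.
rewrite im_preim //; apply: block_avoid hp hs hC _; by rewrite hCI.
Qed.

Lemma rT t : partition t setT -> remove_part I (addI t) = t.
Proof.
case/partitionTP => t0 tc tu; apply/setP => B; rewrite mem_rp; apply/exists_inP/idP.
  case=> C; rewrite mem_addI => /orP [/exists_inP [B' hB' /eqP ->] | /exists_inP [j hj /eqP ->]].
    by move=> /andP [_ /eqP ->]; rewrite preim_im.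
  by rewrite sub1set hj.
move=> hB; exists (ce @: B).
  by rewrite mem_addI; apply/orP; left; apply/exists_inP; exists B.
rewrite preim_im eqxx andbT.
have [k hk] : exists k, k \in B by apply/set0Pn; apply: contraNneq t0 => <-.
by apply/subsetPn; exists (ce k); rewrite ?imset_f ?ce_notI.
Qed.

Lemma ref_hasI s p : partition s setT -> partition p setT -> hasI p -> refines s p -> hasI s.
Proof.
move=> hs hp hpI /forall_inP hsp j hj.
case/partitionTP: hs => s0 sc su; case/partitionTP: hp => p0 pc pu.
have [B hB jB] := sc j.
case/exists_inP: (hsp B hB) => B' hB' sBB'.
have e : B' = [set j] by apply: (pu _ _ j hB' (hpI j hj)); rewrite ?set11 // (subsetP sBB').
have [x hx] : exists x, x \in B by apply/set0Pn; apply: contraNneq s0 => <-.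
suff -> : [set j] = B by [].
by apply/eqP; rewrite eqEsubset sub1set jB -e.
Qed.

Lemma T_mono t' t : partition t' setT -> partition t setT ->
  refines (addI t') (addI t) = refines t' t.
Proof.
case/partitionTP => t0 tc tu _; apply/forall_inP/forall_inP.
  move=> h B hB.
  have := h (ce @: B); rewrite mem_addI; case/(_ _)/exists_inP.
    by apply/orP; left; apply/exists_inP; exists B.
  move=> C; rewrite mem_addI => /orP [/exists_inP [B' hB' /eqP ->] | /exists_inP [j hj /eqP ->]].
    move=> sub; apply/exists_inP; exists B' => //.
    by rewrite -(preim_im B) -(preim_im B') preimsetS.
  have [k hk] : exists k, k \in B by apply/set0Pn; apply: contraNneq t0 => <-.
  move/subsetP/(_ (ce k) (imset_f ce hk)); rewrite inE => /eqP e.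
  by have := ce_notI k; rewrite e hj.
move=> h C; rewrite mem_addI => /orP [/exists_inP [B hB /eqP ->] | /exists_inP [j hj /eqP ->]].
  case/exists_inP: (h B hB) => B' hB' sub; apply/exists_inP; exists (ce @: B').
    by rewrite mem_addI; apply/orP; left; apply/exists_inP; exists B'.
  exact: imsetS.
apply/exists_inP; exists [set j] => //.
by rewrite mem_addI; apply/orP; right; apply/exists_inP; exists j.
Qed.

End Transport.

Local Open Scope ring_scope.

Section Refine.
Variable n : nat.
Implicit Types s p : {set {set 'I_n}}.

Lemma refines_refl s : refines s s.
Proof. by apply/forall_inP => B hB; apply/exists_inP; exists B. Qed.

Lemma refines_trans : transitive (@refines n).
Proof.
move=> b a c /forall_inP hab /forall_inP hbc; apply/forall_inP => B hB.
case/exists_inP: (hab B hB) => B' hB' s1.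
case/exists_inP: (hbc B' hB') => B'' hB'' s2.
by apply/exists_inP; exists B''; rewrite // (subset_trans s1 s2).
Qed.

Lemma refines_sub s p : partition s setT -> partition p setT ->
  refines s p -> refines p s -> {subset s <= p}.
Proof.
move=> /partitionTP [s0 sc su] /partitionTP [p0 pc pu] /forall_inP h1 /forall_inP h2 B hB.
case/exists_inP: (h1 B hB) => B' hB' sB.
case/exists_inP: (h2 B' hB') => B'' hB'' sB'.
have [x hx] : exists x, x \in B.
  by apply/set0Pn; apply: contraNneq s0 => <-.
have e : B = B'' by apply: (su _ _ x) => //; apply: (subsetP sB'); apply: (subsetP sB).
have -> : B = B'.
  by apply/eqP; rewrite eqEsubset sB; rewrite e in sB *; rewrite sB'.
done.
Qed.

Lemma refines_anti (s p : Pi n) : refines (val s) (val p) -> refines (val p) (val s) -> s = p.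
Proof.
move=> h1 h2; apply: val_inj; apply/setP => B; apply/idP/idP.
  exact: (refines_sub (valP s) (valP p) h1 h2).
exact: (refines_sub (valP p) (valP s) h2 h1).
Qed.

Definition rlt (s p : Pi n) := refines (val s) (val p) && (s != p).

Lemma rlt_trans : transitive rlt.
Proof.
move=> b a c /andP [h1 n1] /andP [h2 n2]; apply/andP; split.
  exact: refines_trans h1 h2.
apply/eqP => e; subst c; move/eqP: n1; apply; apply: refines_anti => //.
Qed.

Lemma rlt_irr : irreflexive rlt.
Proof. by move=> x; rewrite /rlt eqxx andbF. Qed.

End Refine.

Section Moebius.
Variable R : realType.
Local Notation C := (R[i])%C.
Variable n : nat.

Local Notation Z := (@zeta_mx R n).
Local Notation z s p := ((refines (val s) (val p))%:R : C).

Lemma zeta_E (s p : Pi n) : Z (enum_rank s) (enum_rank p) = z s p.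
Proof. by rewrite mxE !enum_rankK. Qed.

Lemma sum_rank (F : 'I_#|{: Pi n}| -> C) :
  \sum_k F k = \sum_(t : Pi n) F (enum_rank t).
Proof. by rewrite (reindex enum_rank) //; apply: onW_bij; apply: enum_rank_bij. Qed.

Lemma z_if (b : bool) (x : C) : (if b then x else 0) = b%:R * x.
Proof. by case: b; rewrite ?mul1r ?mul0r. Qed.

Lemma zeta_unit : Z \in unitmx.
Proof.
rewrite -row_free_unit -kermx_eq0; apply/eqP/matrixP => i j; rewrite [RHS]mxE.
pose v := row i (kermx Z).
have hv : v *m Z = 0 by rewrite -row_mul mulmx_ker row0.
suff h : forall t : Pi n, v 0 (enum_rank t) = 0.
  by have := h (enum_val j); rewrite enum_valK mxE.
apply: (poset_ind (@rlt_trans n) (@rlt_irr n)) => p IH.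
have := congr1 (fun M : 'M[C]_(1, #|{: Pi n}|) => M 0 (enum_rank p)) hv; rewrite /= mxE [RHS]mxE sum_rank.
rewrite (bigD1 p) //= zeta_E refines_refl mulr1 big1 ?addr0 //.
move=> t htp; rewrite zeta_E; case h: (refines (val t) (val p)); last by rewrite mulr0.
by rewrite IH ?mul0r // /rlt h htp.
Qed.

Lemma mu_val (s p : Pi n) : mu R (val s) (val p) = invmx Z (enum_rank s) (enum_rank p).
Proof. by rewrite /mu !valK. Qed.

Lemma zeta_mu (s p : Pi n) : \sum_(t : Pi n) z s t * mu R (val t) (val p) = (s == p)%:R.
Proof.
have := congr1 (fun M : 'M[C]_#|{: Pi n}| => M (enum_rank s) (enum_rank p)) (mulmxV zeta_unit).
rewrite /= !mxE sum_rank (inj_eq enum_rank_inj) => <-.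
by apply: eq_bigr => t _; rewrite zeta_E mu_val.
Qed.

Lemma mu_zeta (s p : Pi n) : \sum_(t : Pi n) mu R (val s) (val t) * z t p = (s == p)%:R.
Proof.
have := congr1 (fun M : 'M[C]_#|{: Pi n}| => M (enum_rank s) (enum_rank p)) (mulVmx zeta_unit).
rewrite /= !mxE sum_rank (inj_eq enum_rank_inj) => <-.
by apply: eq_bigr => t _; rewrite zeta_E mu_val.
Qed.

Lemma mu_upper (s p : Pi n) : ~~ refines (val s) (val p) -> mu R (val s) (val p) = 0.
Proof.
pose gt := fun x y : Pi n => rlt y x.
have gtt : transitive gt by move=> b a c h1 h2; apply: rlt_trans h2 h1.
have gti : irreflexive gt by move=> x; apply: rlt_irr.
move: s; apply: (poset_ind gtt gti) => s IH hs.
have hsp : s != p by apply: contraNneq hs => ->; apply: refines_refl.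
have := zeta_mu s p; rewrite (negbTE hsp) (bigD1 s) //= refines_refl mul1r big1 ?addr0 //.
move=> t hts; case h: (refines (val s) (val t)); last by rewrite mul0r.
have g1 : gt t s by rewrite /gt /rlt h eq_sym.
have g2 : ~~ refines (val t) (val p).
  by apply: contraNN hs => htp; apply: refines_trans htp.
by rewrite (IH t g1 g2) mulr0.
Qed.

Variables (A : algType C) (phi : A -> C) (E : exch_system phi).

Lemma sum_pred1 (F : Pi n -> C) (p : Pi n) : \sum_(t : Pi n) F t * (t == p)%:R = F p.
Proof.
rewrite (eq_bigr (fun t : Pi n => if t == p then F t else 0)); last first.
  by move=> t _; case: eqP; rewrite ?mulr1 ?mulr0.
by rewrite -big_mkcond big_pred1_eq.
Qed.

Lemma phi_sum (X : 'I_n -> A) (p : Pi n) :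
  phi_part E (val p) X = \sum_(s : Pi n | refines (val s) (val p)) K E (val s) X.
Proof.
rewrite big_mkcond /=.
rewrite (eq_bigr (fun s : Pi n => z s p * \sum_(t : Pi n) phi_part E (val t) X * mu R (val t) (val s))); last first.
  move=> s _; rewrite z_if /K big_mkcond /=; congr (_ * _); apply: eq_bigr => t _.
  by case h: (refines _ _) => //; rewrite mu_upper ?h // mulr0.
rewrite (eq_bigr (fun s : Pi n => \sum_(t : Pi n) phi_part E (val t) X * (mu R (val t) (val s) * z s p))); last first.
  by move=> s _; rewrite mulr_sumr; apply: eq_bigr => t _; rewrite mulrC -mulrA.
rewrite exchange_big /=.
rewrite (eq_bigr (fun t : Pi n => phi_part E (val t) X * (t == p)%:R)); last first.
  by move=> t _; rewrite -mulr_sumr mu_zeta.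
by rewrite sum_pred1.
Qed.

Lemma inv_sum (g : {set {set 'I_n}} -> C) (p : Pi n) :
  \sum_(s : Pi n | refines (val s) (val p))
     (\sum_(t : Pi n | refines (val t) (val s)) g (val t)) * mu R (val s) (val p) = g (val p).
Proof.
rewrite big_mkcond /=.
rewrite (eq_bigr (fun s : Pi n => \sum_(t : Pi n) g (val t) * (z t s * mu R (val s) (val p)))); last first.
  move=> s _; rewrite big_mkcond /= mulr_suml.
  case h: (refines (val s) (val p)); last first.
    by rewrite big1 // => t _; rewrite mu_upper ?h // !mulr0.
  by apply: eq_bigr => t _; rewrite z_if mulrA [g _ * _]mulrC.
rewrite exchange_big /=.
rewrite (eq_bigr (fun t : Pi n => g (val t) * (t == p)%:R)); last first.
  by move=> t _; rewrite -mulr_sumr zeta_mu.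
by rewrite (sum_pred1 (fun t => g (val t))).
Qed.

End Moebius.


Section Final.
Variable R : realType.
Local Notation C := (R[i])%C.

Lemma big_Pi n (P : pred {set {set 'I_n}}) (F : {set {set 'I_n}} -> C) :
  \sum_(S | partition S setT && P S) F S = \sum_(s : Pi n | P (val s)) F (val s).
Proof.
rewrite (reindex_omap (val : Pi n -> _) insub); last first.
  by move=> S /andP [h _]; rewrite insubT.
apply: eq_bigl => -[S hS] /=; rewrite hS /=.
by rewrite (insubT (fun P => partition P setT) hS) /= eqxx andbT.
Qed.

Lemma idx_eq (T : finType) (P : {set {set T}}) x y : partition P setT ->
  (index (pblock P x) (enum P) == index (pblock P y) (enum P)) = (y \in pblock P x).
Proof.
case/and3P => /eqP hc ht _.
have cx : x \in cover P by rewrite hc inE.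
have cy : y \in cover P by rewrite hc inE.
rewrite -(eq_pblock _ ht cx); apply/eqP/eqP => [e|-> //].
have m1 : pblock P x \in enum P by rewrite mem_enum pblock_mem.
have m2 : pblock P y \in enum P by rewrite mem_enum pblock_mem.
exact: (@index_inj _ (pblock P x) (enum P) _ _ m1 m2 e).
Qed.

Variables (A : algType C) (phi : A -> C) (E : exch_system phi).

Lemma iota1 k : ex_iota E k 1 = 1.
Proof. by case: (ex_iota_hom E k). Qed.

Lemma exch_kernel m (Y : 'I_m -> A) (a b : 'I_m -> nat) :
  (forall k k', (a k == a k') = (b k == b k')) ->
  ex_phi (e:=E) (\prod_(k < m) ex_iota E (a k) (Y k)) =
  ex_phi (e:=E) (\prod_(k < m) ex_iota E (b k) (Y k)).
Proof.
move=> h; have [s [sb hs]] := kernel_bij h.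
rewrite (ex_exch E Y a sb); congr (ex_phi (e:=E) _); apply: eq_bigr => k _.
by rewrite hs.
Qed.

Variables (n : nat) (I : {set 'I_n}).
Local Notation n' := #|~: I|.
Local Notation ce := (@compl_enum n I).

Lemma phi_T (X : 'I_n -> A) (t : {set {set 'I_n'}}) : partition t setT ->
  (forall j, j \in I -> X j = 1) ->
  phi_part E (addI t) X = phi_part E t (fun k => X (ce k)).
Proof.
move=> ht hX; rewrite /phi_part.
set a := fun j => index (pblock (addI t) j) (enum (addI t)).
have -> : \prod_(j < n) ex_iota E (a j) (X j) = \prod_(j in ~: I) ex_iota E (a j) (X j).
  rewrite [RHS]big_mkcond; apply: eq_bigr => j _; rewrite inE.
  by case: ifP => hj //; rewrite hX ?(negbFE hj) ?iota1.
rewrite big_enum_val_nc; apply: exch_kernel => k k'.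
rewrite /a idx_eq ?T_part // idx_eq //.
have hT := T_part ht; case/and3P: (hT) => /eqP hc htr _.
case/and3P: (ht) => /eqP hc' _ _.
have ck : k \in cover t by rewrite hc' inE.
have -> : pblock (addI t) (ce k) = ce @: pblock t k.
  apply: def_pblock => //; last by rewrite imset_f // mem_pblock.
  by rewrite mem_addI; apply/orP; left; apply/exists_inP; exists (pblock t k); rewrite ?pblock_mem.
by rewrite mem_imset //; apply: ce_inj.
Qed.

Lemma reindexT (F : {set {set 'I_n}} -> C) t : partition t setT ->
  \sum_(S | partition S setT && refines S (addI t)) F S =
  \sum_(S' : {set {set 'I_n'}} | partition S' setT && refines S' t) F (addI S').
Proof.
move=> ht.
rewrite (reindex_onto (@addI n I) (remove_part I)); last first.
  move=> S /andP [hS hr]; apply: Tr => //.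
  exact: (ref_hasI hS (T_part ht) (T_hasI t) hr).
apply: eq_bigl => S'; apply/idP/idP.
  case/andP => /andP [hp hr] /eqP e.
  have hS' : partition S' setT by rewrite -e; apply: r_part.
  by rewrite hS' -(T_mono hS' ht) hr.
case/andP => hS' hr.
by rewrite T_part // (T_mono hS' ht) hr rT // eqxx.
Qed.

End Final.


Unset Implicit Arguments.
Theorem lemma3p8 (R : realType) (A : algType (R[i])%C) (phi : A -> (R[i])%C)
  (E : exch_system phi) (n : nat) (X : 'I_n -> A) (I : {set 'I_n})
  (p : {set {set 'I_n}}) :
  nc_functional phi ->
  partition p [set: 'I_n] ->
  (forall j, j \in I -> X j = 1) ->
  (forall j, j \in I -> [set j] \in p) ->
  K E p X = K E (remove_part I p) (fun k => X (@compl_enum n I k)).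
Proof.
move=> _ hp hX hI.
have ht0 : partition (remove_part I p) setT := r_part I hp.
pose t0 : Pi #|~: I| := Sub (remove_part I p) ht0.
pose g := fun S : {set {set 'I_#|~: I|}} => K E (addI S) X.
transitivity (g (val t0)); last first.
  rewrite -(inv_sum g t0) /K; apply: eq_bigr => s hs; congr (_ * _).
  rewrite -(phi_T E (X:=X) (valP s) hX).
  rewrite (phi_sum E X (Sub (addI (val s)) (T_part (valP s)))) /=.
  rewrite -(big_Pi (fun S => refines S (addI (val s))) (fun S => K E S X)).
  rewrite reindexT ?(valP s) //.
  by rewrite (big_Pi (fun S => refines S (val s)) g).
by rewrite /g /= Tr.
Qed.
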